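(* Let $M$ be an interpretation and $\varphi$ an $\mathcal{ALC}$-formula. Then $\mathrm{Mod}(\varphi)\setminus[M]_\varphi=\mathrm{Mod}(\mathcal{C}(\varphi,M))$.
   Context: $\mathcal{ALC}$ concepts: $C::=A\mid\neg C\mid(C\sqcap C)\mid\exists r.C$. $\mathcal{ALC}$-formulae: $\phi::=\alpha\mid\neg\phi\mid(\phi\wedge\phi)$, atomic $\alpha::=C(a)\mid r(a,b)\mid(C=\top)$; $\neg\neg\psi$ identified with $\psi$; $\vee,\bot$ usual abbreviations. A literal is an atomic formula or its negation. Interpretations: countable nonempty domain, standard semantics; $\mathrm{Mod}(\varphi)$: interpretations satisfying $\varphi$. $\mathrm{Sub}(\alpha)=\mathrm{Sub}(\neg\alpha)=\{\alpha,\neg\alpha\}$ for atomic $\alpha$; $\mathrm{Sub}(\psi\wedge\psi')=\mathrm{Sub}(\neg(\psi\wedge\psi'))=\{\psi\wedge\psi',\neg(\psi\wedge\psi')\}\cup\mathrm{Sub}(\psi)\cup\mathrm{Sub}(\psi')$. $\mathrm{con}(\varphi)$: smallest set of concepts containing $C$ whenever $(C=\top)$ or $C(a)$ is in $\mathrm{Sub}(\varphi)$, closed under subconcepts of $\sqcap$, $\exists r.\cdot$, and single negation. $\mathrm{ind}(\varphi)$: individual names in $\varphi$. Concept type: $c\subseteq\mathrm{con}(\varphi)$ with $D\in c$ iff $\neg D\notin c$, $D\sqcap E\in c$ iff $\{D,E\}\subseteq c$. Formula type for $\varphi$: $f\subseteq\mathrm{Sub}(\varphi)$ with $\psi\in f$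 iff $\neg\psi\notin f$, $\psi\wedge\psi'\in f$ iff $\{\psi,\psi'\}\subseteq f$. Model candidate $(T,o,f)$: $T$ set of concept types, $o:\mathrm{ind}(\varphi)\to T$, $f$ formula type with $\varphi\in f$, $C(a)\in f\Rightarrow C\in o(a)$, $r(a,b)\in f\Rightarrow\{\neg C\mid\neg\exists r.C\in o(a)\}\subseteq o(b)$. Quasimodel: model candidate where each $\exists r.D\in c\in T$ has $c'\in T$ with $\{D\}\cup\{\neg E\mid\neg\exists r.E\in c\}\subseteq c'$; $\neg C\in c\in T$ implies $(C=\top)\notin f$; $\neg(C=\top)\in f$ implies some $c\in T$ has $C\notin c$; $T\ne\emptyset$. $\mathrm{ftypes}(\varphi)=\{f\mid(T,o,f)$ quasimodel for $\varphi\}$. $\mathrm{qm}(\varphi,I)=(T,o,f)$ with $T=\{c(x)\mid x\in\Delta^I\}$, $c(x)=\{C\in\mathrm{con}(\varphi)\mid x\in C^I\}$, $o(a)=c(a^I)$, $f=\{\psi\in\mathrm{Sub}(\varphi)\mid I\models\psi\}$. $\mathrm{lit}(f)$: literals in $f$. $\mathrm{qfilter}(\varphi,M)=\mathrm{ftypes}(\varphi)\setminus\{f\}$ where $\mathrm{qm}(\varphi,M)=(T,o,f)$. $\mathcal{C}(\varphi,M)=\bigvee_{f\in\mathrm{qfilter}(\varphi,M)}\bigwedge\mathrm{lit}(f)$ if $M\models\varphi$ and $\mathrm{qfilter}(\varphi,M)\ne\emptyset$; $\bot$ if $M\models\varphi$ and $\mathrm{qfilter}(\varphi,M)=\emptyset$;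 $\varphi$ otherwise. $\mathcal{L}_{lit}(\varphi)$: Boolean combinations of atomic formulae occurring in $\varphi$; $M'\equiv_\varphi M$ iff they satisfy the same formulae of $\mathcal{L}_{lit}(\varphi)$; $[M]_\varphi=\{M'\mid M'\equiv_\varphi M\}$. *)

(* Defs.v *)
From Stdlib Require Import List Classical ClassicalDescription.
Import ListNotations.

Inductive concept : Type :=
| CAtom (A : nat)
| CNeg (C : concept)
| CAnd (C D : concept)
| CEx (r : nat) (C : concept).

(* atomic formulae: C(a), r(a,b), (C = T) *)
Inductive atom : Type :=
| AConc (C : concept) (a : nat)
| ARole (r a b : nat)
| ATop (C : concept).

Inductive formula : Type :=
| FAtom (al : atom)
| FNeg (p : formula)
| FAnd (p q : formula).

Record interp : Type := {
  dom : Type;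
  dom_inhabited : inhabited dom;
  dom_countable : exists f : dom -> nat, forall x y, f x = f y -> x = y;
  conc_int : nat -> dom -> Prop;
  role_int : nat -> dom -> dom -> Prop;
  ind_int : nat -> dom }.

Fixpoint cint (I : interp) (C : concept) (x : dom I) : Prop :=
  match C with
  | CAtom A => conc_int I A x
  | CNeg C' => ~ cint I C' x
  | CAnd C1 C2 => cint I C1 x /\ cint I C2 x
  | CEx r C' => exists y, role_int I r x y /\ cint I C' y
  end.

Definition sat_atom (I : interp) (al : atom) : Prop :=
  match al with
  | AConc C a => cint I C (ind_int I a)
  | ARole r a b => role_int I r (ind_int I a) (ind_int I b)
  | ATop C => forall x, cint I C x
  end.

Fixpoint sat (I : interp) (p : formula) : Prop :=
  match p with
  | FAtom al => sat_atom I al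
  | FNeg q => ~ sat I q
  | FAnd q1 q2 => sat I q1 /\ sat I q2
  end.

Definition Mod (phi : formula) (I : interp) : Prop := sat I phi.

Definition fneg (p : formula) : formula :=
  match p with FNeg q => q | _ => FNeg p end.
Definition cneg (C : concept) : concept :=
  match C with CNeg D => D | _ => CNeg C end.

(* normal form modulo the identification  ~~psi = psi *)
Fixpoint nf (p : formula) : formula :=
  match p with
  | FAtom al => FAtom al
  | FNeg q => fneg (nf q)
  | FAnd q1 q2 => FAnd (nf q1) (nf q2)
  end.

Fixpoint sub_list (p : formula) : list formula :=
  match p with
  | FAtom al => [FAtom al; FNeg (FAtom al)]
  | FNeg q => sub_list q
  | FAnd q1 q2 => [FAnd q1 q2; FNeg (FAnd q1 q2)] ++ sub_list q1 ++ sub_list q2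
  end.
Definition Sub (phi : formula) : list formula := sub_list (nf phi).

Fixpoint atoms_of (p : formula) : list atom :=
  match p with
  | FAtom al => [al]
  | FNeg q => atoms_of q
  | FAnd q1 q2 => atoms_of q1 ++ atoms_of q2
  end.

Inductive con (phi : formula) : concept -> Prop :=
| con_conc : forall C a, In (FAtom (AConc C a)) (Sub phi) -> con phi C
| con_top : forall C, In (FAtom (ATop C)) (Sub phi) -> con phi C
| con_andl : forall C D, con phi (CAnd C D) -> con phi C
| con_andr : forall C D, con phi (CAnd C D) -> con phi D
| con_ex : forall r C, con phi (CEx r C) -> con phi C
| con_negsub : forall C, con phi (CNeg C) -> con phi C
| con_neg : forall C, con phi C -> con phi (cneg C).

Definition atom_mentions (al : atom) (a : nat) : Prop :=
  match al with
  | AConc _ b => a = b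
  | ARole _ b c => a = b \/ a = c
  | ATop _ => False
  end.
Definition ind (phi : formula) (a : nat) : Prop :=
  exists al, In al (atoms_of phi) /\ atom_mentions al a.

Definition concept_type (phi : formula) (c : concept -> Prop) : Prop :=
  (forall D, c D -> con phi D) /\
  (forall D, con phi D -> (c D <-> ~ c (cneg D))) /\
  (forall D E, con phi (CAnd D E) -> (c (CAnd D E) <-> c D /\ c E)).

Definition formula_type (phi : formula) (f : formula -> Prop) : Prop :=
  (forall p, f p -> In p (Sub phi)) /\
  (forall p, In p (Sub phi) -> (f p <-> ~ f (fneg p))) /\
  (forall p q, In (FAnd p q) (Sub phi) -> (f (FAnd p q) <-> f p /\ f q)).

Definition model_candidate (phi : formula) (T : (concept -> Prop) -> Prop)
    (o : nat -> concept -> Prop) (f : formula -> Prop) : Prop :=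
  (forall c, T c -> concept_type phi c) /\
  (forall a, ind phi a -> T (o a)) /\
  formula_type phi f /\
  f (nf phi) /\
  (forall C a, f (FAtom (AConc C a)) -> o a C) /\
  (forall r a b, f (FAtom (ARole r a b)) ->
     forall C, o a (CNeg (CEx r C)) -> o b (cneg C)).

Definition quasimodel (phi : formula) (T : (concept -> Prop) -> Prop)
    (o : nat -> concept -> Prop) (f : formula -> Prop) : Prop :=
  model_candidate phi T o f /\
  (forall c, T c -> forall r D, c (CEx r D) ->
     exists c', T c' /\ c' D /\ (forall E, c (CNeg (CEx r E)) -> c' (cneg E))) /\
  (forall c C, T c -> c (cneg C) -> ~ f (FAtom (ATop C))) /\
  (forall C, f (FNeg (FAtom (ATop C))) -> exists c, T c /\ ~ c C) /\
  (exists c, T c).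

Definition ftypes (phi : formula) (f : formula -> Prop) : Prop :=
  exists T o, quasimodel phi T o f.

Definition qm_T (phi : formula) (I : interp) (c : concept -> Prop) : Prop :=
  exists x : dom I, forall C, c C <-> (con phi C /\ cint I C x).
Definition qm_o (phi : formula) (I : interp) (a : nat) (C : concept) : Prop :=
  con phi C /\ cint I C (ind_int I a).
Definition qm_f (phi : formula) (I : interp) (p : formula) : Prop :=
  In p (Sub phi) /\ sat I p.

Definition qfilter (phi : formula) (M : interp) (f : formula -> Prop) : Prop :=
  ftypes phi f /\ ~ (forall p, f p <-> qm_f phi M p).

Definition fbot : formula :=
  FAnd (FAtom (ATop (CAtom 0))) (FNeg (FAtom (ATop (CAtom 0)))).
Definition ftop : formula := FNeg fbot.
Definition for_ (p q : formula) : formula := fneg (FAnd (fneg p) (fneg q)).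

Fixpoint bigAnd (l : list formula) : formula :=
  match l with
  | [] => ftop
  | [p] => p
  | p :: l' => FAnd p (bigAnd l')
  end.
Fixpoint bigOr (l : list formula) : formula :=
  match l with
  | [] => fbot
  | [p] => p
  | p :: l' => for_ p (bigOr l')
  end.

Definition is_literal (p : formula) : bool :=
  match p with
  | FAtom _ => true
  | FNeg (FAtom _) => true
  | _ => false
  end.

(* /\ lit(f), for a formula type given by a list of its elements *)
Definition lit_conj (S : list formula) : formula := bigAnd (filter is_literal S).

Fixpoint sublists {A : Type} (l : list A) : list (list A) :=
  match l with
  | [] => [[]]
  | x :: l' => let r := sublists l' in map (cons x) r ++ r
  end.

(* an enumeration of qfilter(phi,M): every formula type is a subset of Sub(phi),
   hence the set of elements of some sublist of Sub(phi) *)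
Definition qfilter_list (phi : formula) (M : interp) : list (list formula) :=
  filter (fun S => if excluded_middle_informative (qfilter phi M (fun p => In p S))
                   then true else false)
         (sublists (Sub phi)).

Definition Ccal (phi : formula) (M : interp) : formula :=
  if excluded_middle_informative (sat M phi) then
    match qfilter_list phi M with
    | [] => fbot
    | L => bigOr (map lit_conj L)
    end
  else phi.

Definition L_lit (phi : formula) (p : formula) : Prop :=
  forall al, In al (atoms_of p) -> In al (atoms_of phi).
Definition lit_equiv (phi : formula) (M' M : interp) : Prop :=
  forall p, L_lit phi p -> (sat M' p <-> sat M p).

(* Main.v *)
Require Import Defs.
From Stdlib Require Import List Classical ClassicalDescription FunctionalExtensionality PropExtensionality.
Import ListNotations.

Lemma fneg_sat I p : sat I (fneg p) <-> ~ sat I p.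
Proof. destruct p; simpl; try tauto. Qed.

Lemma cint_cneg I C x : cint I (cneg C) x <-> ~ cint I C x.
Proof. destruct C; simpl; try tauto. Qed.

Fixpoint normal (p:formula) : Prop :=
  match p with
  | FAtom _ => True
  | FNeg q => normal q /\ (match q with FNeg _ => False | _ => True end)
  | FAnd a b => normal a /\ normal b
  end.

Lemma nf_normal p : normal (nf p).
Proof.
  induction p; simpl; auto.
  destruct (nf p) eqn:E; simpl in *; tauto.
Qed.

Lemma self_in p : normal p -> In p (sub_list p).
Proof.
  destruct p; simpl; intros H; auto.
  destruct p; simpl; [right;left;auto | tauto | right; left; auto].
Qed.

Lemma fneg_closed p : normal p -> forall q, In q (sub_list p) -> In (fneg q) (sub_list p).
Proof.
  induction p; simpl; intros Hn q H.
  - destruct H as [<-|[<-|[]]]; simpl; auto.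
  - apply IHp; tauto.
  - destruct H as [<-|[<-|H]]; simpl; [right;left;auto | left;auto |].
    right; right. apply in_app_iff in H; apply in_app_iff.
    destruct H; [left; apply IHp1 | right; apply IHp2]; tauto.
Qed.

Lemma and_closed p : normal p -> forall a b, In (FAnd a b) (sub_list p) ->
  In a (sub_list p) /\ In b (sub_list p).
Proof.
  induction p; simpl; intros Hn a b H.
  - destruct H as [H|[H|[]]]; discriminate.
  - apply IHp; tauto.
  - destruct H as [H|[H|H]].
    + inversion H; subst. split; right; right; apply in_app_iff;
      [left|right]; apply self_in; tauto.
    + discriminate.
    + apply in_app_iff in H. destruct H as [H|H].
      * destruct (IHp1 (proj1 Hn) _ _ H). split; right; right; apply in_app_iff; left; auto.
      * destruct (IHp2 (proj2 Hn) _ _ H). split; right; right; apply in_app_iff; right; auto.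
Qed.

Lemma atoms_sub p : forall q, In q (sub_list p) -> forall al, In al (atoms_of q) -> In al (atoms_of p).
Proof.
  induction p; simpl; intros q H b Hal.
  - destruct H as [<-|[<-|[]]]; simpl in Hal; auto.
  - eauto.
  - destruct H as [<-|[<-|H]]; simpl in Hal; auto.
    apply in_app_iff in H; apply in_app_iff. destruct H; eauto.
Qed.

Lemma atom_in p al : In al (atoms_of p) -> In (FAtom al) (sub_list p).
Proof.
  induction p; simpl; intros H.
  - destruct H as [<-|[]]; auto.
  - auto.
  - right; right. apply in_app_iff in H; apply in_app_iff. destruct H; auto.
Qed.

Lemma atoms_fneg p : atoms_of (fneg p) = atoms_of p.
Proof. destruct p; reflexivity. Qed.

Lemma atoms_nf p : atoms_of (nf p) = atoms_of p.
Proof. induction p; simpl; rewrite ?atoms_fneg; congruence. Qed.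

Lemma sat_nf I p : sat I (nf p) <-> sat I p.
Proof.
  induction p; simpl; try tauto.
  rewrite fneg_sat, IHp; tauto.
Qed.

Lemma Sub_fneg phi p : In p (Sub phi) -> In (fneg p) (Sub phi).
Proof. apply fneg_closed, nf_normal. Qed.
Lemma Sub_and phi a b : In (FAnd a b) (Sub phi) -> In a (Sub phi) /\ In b (Sub phi).
Proof. apply and_closed, nf_normal. Qed.
Lemma Sub_self phi : In (nf phi) (Sub phi).
Proof. apply self_in, nf_normal. Qed.
Lemma Sub_atoms phi q : In q (Sub phi) -> L_lit phi q.
Proof. intros H al Hal. rewrite <- atoms_nf. eapply atoms_sub; eauto. Qed.
Lemma Sub_atom phi al : In al (atoms_of phi) -> In (FAtom al) (Sub phi).
Proof. intros H. apply atom_in. rewrite atoms_nf; auto. Qed.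

Lemma lit_agree I M phi :
  (forall al, In al (atoms_of phi) -> (sat I (FAtom al) <-> sat M (FAtom al))) ->
  lit_equiv phi I M.
Proof.
  unfold lit_equiv, L_lit. intros H p; induction p; simpl; intros H0.
  - exact (H al (H0 al (or_introl eq_refl))).
  - rewrite IHp; tauto.
  - rewrite IHp1, IHp2; [tauto| |]; intros al Hal; apply H0; apply in_app_iff; auto.
Qed.

Lemma fbot_sat I : ~ sat I fbot.
Proof. simpl; tauto. Qed.

Lemma bigAnd_sat I l : sat I (bigAnd l) <-> forall p, In p l -> sat I p.
Proof.
  induction l as [|a l IH].
  - simpl. split; [intros _ p []| tauto].
  - destruct l as [|b l'].
    + simpl. split; [intros h p [<-|[]]; auto | intros h; apply h; auto].
    + change (sat I (FAnd a (bigAnd (b :: l'))) <-> forall p, In p (a :: b :: l') -> sat I p).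
      simpl sat at 1. rewrite IH. split.
      * intros [h1 h2] p [<-|Hp]; auto.
      * intros h; split; [apply h; left; auto | intros p Hp; apply h; right; auto].
Qed.

Lemma bigOr_sat I l : sat I (bigOr l) <-> exists p, In p l /\ sat I p.
Proof.
  induction l as [|a l IH].
  - simpl. split; [tauto| intros [p [[] _]]].
  - destruct l as [|b l'].
    + simpl. split; [intros h; exists a; auto | intros [p [[<-|[]] h]]; auto].
    + change (sat I (for_ a (bigOr (b :: l'))) <-> exists p, In p (a :: b :: l') /\ sat I p).
      unfold for_. rewrite fneg_sat. simpl sat at 1. rewrite !fneg_sat, IH. split.
      * intros h. apply NNPP; intro hn. apply h. split.
        -- intro ha; apply hn; exists a; split; auto; left; auto.
        -- intros [p [Hp hp]]; apply hn; exists p; split; auto; right; auto.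
      * intros [p [[<-|Hp] hp]] [h1 h2]; auto. apply h2; eauto.
Qed.

Lemma sublists_filter {A} (f : A -> bool) l : In (filter f l) (sublists l).
Proof.
  induction l; simpl. left; auto.
  destruct (f a); apply in_app_iff; [left; apply in_map | right]; auto.
Qed.

Lemma qlist_iff phi M S : In S (qfilter_list phi M) <->
  In S (sublists (Sub phi)) /\ qfilter phi M (fun p => In p S).
Proof.
  unfold qfilter_list; rewrite filter_In.
  destruct (excluded_middle_informative _); intuition discriminate.
Qed.

Lemma Ccal_sat phi M I : sat M phi ->
  (sat I (Ccal phi M) <-> exists S, In S (qfilter_list phi M) /\ sat I (lit_conj S)).
Proof.
  intros HM. unfold Ccal.
  destruct (excluded_middle_informative (sat M phi)); [|contradiction].
  destruct (qfilter_list phi M) eqn:E.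
  - split; [intros h; exfalso; exact (fbot_sat _ h) | intros [S [[] _]]].
  - rewrite bigOr_sat. split.
    + intros [p [Hp hp]]. apply in_map_iff in Hp. destruct Hp as [S [<- HS]]. eauto.
    + intros [S [HS hS]]. exists (lit_conj S); split; auto. apply in_map; auto.
Qed.

Lemma qm_quasimodel phi I : sat I phi ->
  quasimodel phi (qm_T phi I) (qm_o phi I) (qm_f phi I).
Proof.
  intros HI.
  assert (CT: forall c, qm_T phi I c -> concept_type phi c).
  { intros c [x Hx]. unfold concept_type. split;[|split].
    - intros D HD; apply Hx in HD; tauto.
    - intros D HD. rewrite !Hx. rewrite cint_cneg. split.
      + tauto.
      + intro h. split; auto. apply NNPP; intro h'. apply h.
        split; [apply con_neg; auto | auto].
    - intros D E HDE. rewrite !Hx. simpl.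
      pose proof (con_andl _ _ _ HDE); pose proof (con_andr _ _ _ HDE); tauto. }
  unfold quasimodel, model_candidate.
  split; [split;[|split;[|split;[|split;[|]]]] | split; [|split;[|split]]].
  - exact CT.
  - intros a _. exists (ind_int I a). intro C. unfold qm_o. tauto.
  - split;[|split].
    + intros p [h _]; auto.
    + intros p Hp. unfold qm_f. rewrite fneg_sat. pose proof (Sub_fneg phi p Hp). tauto.
    + intros p q Hpq. unfold qm_f. destruct (Sub_and _ _ _ Hpq). simpl. tauto.
  - split; [apply Sub_self | apply sat_nf; auto].
  - split.
    + intros C a [Hin Hs]. split; [eapply con_conc; eauto | exact Hs].
    + intros r a b [Hin Hs] C [Hc Hs']. split.
      * apply con_neg. apply con_ex with r. apply con_negsub. exact Hc.
      * rewrite cint_cneg. intro hC. apply Hs'. simpl. exists (ind_int I b). simpl in Hs. auto.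
  - intros c [x Hx] r D HD. apply Hx in HD. destruct HD as [Hc [y [Hr Hy]]].
    exists (fun C => con phi C /\ cint I C y). split; [exists y; intro; tauto|]. split.
    + split; [apply con_ex with r; auto| auto].
    + intros E HE. apply Hx in HE. destruct HE as [HcE HE]. split.
      * apply con_neg, con_ex with r, con_negsub; auto.
      * rewrite cint_cneg. intro; apply HE; simpl; eauto.
  - intros c C [x Hx] Hc [_ Hs]. apply Hx in Hc. destruct Hc as [_ Hc].
    rewrite cint_cneg in Hc. apply Hc. simpl in Hs. apply Hs.
  - intros C [_ Hs]. simpl in Hs. apply not_all_ex_not in Hs. destruct Hs as [x Hx].
    exists (fun D => con phi D /\ cint I D x). split; [exists x; intro; tauto|].
    intros [_ h]; auto.
  - destruct (dom_inhabited I) as [x]. exists (fun D => con phi D /\ cint I D x).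
    exists x; intro; tauto.
Qed.

Theorem mainTheorem16 (M : interp) (phi : formula) :
  forall I : interp,
    (Mod phi I /\ ~ lit_equiv phi I M) <-> Mod (Ccal phi M) I.
Proof.
  intros I. unfold Mod. destruct (classic (sat M phi)) as [HM|HM].
  2:{ unfold Ccal; destruct (excluded_middle_informative (sat M phi)); [contradiction|].
      split; [tauto|]. intros H; split; auto. intros Heq. apply HM.
      apply (Heq phi); [unfold L_lit; auto | exact H]. }
  rewrite (Ccal_sat phi M I HM). split.
  - intros [HI Hne].
    set (S := filter (fun p => if excluded_middle_informative (sat I p) then true else false) (Sub phi)).
    assert (HS: forall p, In p S <-> qm_f phi I p).
    { intro p. unfold S, qm_f; rewrite filter_In.
      destruct (excluded_middle_informative (sat I p)); intuition discriminate. }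
    exists S. split.
    + apply qlist_iff. split; [apply sublists_filter|]. split.
      * replace (fun p => In p S) with (qm_f phi I).
        -- exists (qm_T phi I), (qm_o phi I); apply qm_quasimodel; auto.
        -- apply functional_extensionality; intro p; apply propositional_extensionality;
           symmetry; apply HS.
      * intros Hall. apply Hne. apply lit_agree. intros al Hal.
        pose proof (Sub_atom phi al Hal) as Hs. split; intro h.
        -- assert (H1 : In (FAtom al) S) by (apply HS; split; auto).
           apply Hall in H1. destruct H1; auto.
        -- assert (H1 : qm_f phi M (FAtom al)) by (split; auto).
           apply Hall, HS in H1. destruct H1; auto.
    + unfold lit_conj. apply bigAnd_sat. intros p Hp. apply filter_In in Hp.
      destruct Hp as [Hp _]. apply HS in Hp. apply Hp.
  - intros [S [HS Hlit]]. apply qlist_iff in HS. destruct HS as [_ [[T [o Hq]] Hne]].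
    destruct Hq as [[_ [_ [Hft [Hnf _]]]] _].
    destruct Hft as [Hft1 [Hft2 Hft3]].
    unfold lit_conj in Hlit. rewrite bigAnd_sat in Hlit.
    assert (Hl : forall p, In p S -> is_literal p = true -> sat I p).
    { intros p Hp Hlp. apply Hlit. apply filter_In; auto. }
    assert (Claim : forall p, In p (Sub phi) -> (In p S <-> sat I p)).
    { induction p as [al|q IH|a IHa b IHb]; intros Hin.
      - split; [intro; apply Hl; auto|].
        intro hs. apply NNPP; intro hn.
        assert (H2 : In (FNeg (FAtom al)) S).
        { apply NNPP; intro h2. apply hn. apply (Hft2 _ Hin). exact h2. }
        apply Hl in H2; auto.
      - assert (Hq : In q (Sub phi)) by exact (Sub_fneg phi _ Hin).
        rewrite (Hft2 _ Hin). simpl fneg. rewrite (IH Hq). simpl; tauto.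
      - destruct (Sub_and _ _ _ Hin) as [Ha Hb].
        rewrite (Hft3 _ _ Hin), (IHa Ha), (IHb Hb). simpl; tauto. }
    split.
    + apply sat_nf. apply Claim; [apply Sub_self | exact Hnf].
    + intro Heq. apply Hne. intro p. unfold qm_f. split.
      * intro h. pose proof (Hft1 p h) as Hp. split; auto.
        apply (Heq p (Sub_atoms _ _ Hp)). apply Claim; auto.
      * intros [h1 h2]. apply Claim; auto. apply (Heq p (Sub_atoms _ _ h1)); auto.
Qed.
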